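(* Let $D,\chi,\varepsilon>0$, $a\ge 0$, $\beta>0$, $b=D\beta^2$. Then there is no $r_0>0$ and no pair of functions $\rho\in C^0[0,\infty)$, $\phi\in C^2[0,\infty)$ with $\rho\ge 0$, $\phi(0)\ge 0$, such that $\rho(0)=0$, $\rho>0$ on $(0,r_0)$, $\rho\equiv0$ on $[r_0,\infty)$, $\rho$ is differentiable on $(0,r_0)$ with $\varepsilon\rho\rho_r=\chi\rho\phi_r$ there, and $D\phi_{rr}+D\frac{\phi_r}{r}+a\rho-b\phi=0$ on $(0,\infty)$. (That is, there is no single whole bump solution touching $r=0$.)
   Context: The system $\partial_r(\frac{\varepsilon}{2}\rho^2)=\chi\rho\phi_r$, $D\phi_{rr}+D\phi_r/r+a\rho-b\phi=0$ is the radially symmetric stationary form of a hyperbolic-parabolic chemotaxis model on $\mathbb{R}^2$ with pressure $p(\rho)=\frac{\varepsilon}{2}\rho^2$; $r=|x|$. *)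

(* Defs.v *)
From Stdlib Require Import Reals.
From Coquelicot Require Import Coquelicot.
Open Scope R_scope.

Definition cont_on_nonneg (f : R -> R) : Prop :=
  forall x, 0 <= x ->
    filterlim f (within (fun y => 0 <= y) (locally x)) (locally (f x)).

Definition deriv_on_nonneg (f f1 : R -> R) : Prop :=
  (forall r, 0 < r -> is_derive f r (f1 r)) /\
  filterlim (fun h => (f h - f 0) / h) (at_right 0) (locally (f1 0)).

Definition C2_nonneg (phi phi1 phi2 : R -> R) : Prop :=
  deriv_on_nonneg phi phi1 /\ deriv_on_nonneg phi1 phi2 /\
  cont_on_nonneg phi /\ cont_on_nonneg phi1 /\ cont_on_nonneg phi2.

(* Main.v *)
Require Import Defs.
From Stdlib Require Import Reals Lra.
From Coquelicot Require Import Coquelicot.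
Open Scope R_scope.
Set Printing Width 200.

Lemma clamp_dist x y : 0 <= x -> Rabs (Rmax 0 y - x) <= Rabs (y - x).
Proof.
  intros Hx. destruct (Rle_dec 0 y).
  - rewrite Rmax_right; lra.
  - rewrite Rmax_left by lra. rewrite !Rabs_left1; lra.
Qed.

Lemma clamp_cont f x : cont_on_nonneg f -> 0 <= x -> continuous (fun y => f (Rmax 0 y)) x.
Proof.
  intros Hf Hx. unfold continuous.
  replace (f (Rmax 0 x)) with (f x) by (rewrite Rmax_right; auto).
  eapply filterlim_comp. 2: apply (Hf x Hx).
  intros P [eps He]. exists eps. intros y Hy. apply He.
  - unfold ball in *; simpl in *; unfold AbsRing_ball, abs, minus, plus, opp in *; simpl in *.
    eapply Rle_lt_trans. apply clamp_dist; auto. exact Hy.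
  - apply Rmax_l.
Qed.

Lemma cplus (f g : R -> R) x : continuous f x -> continuous g x -> continuous (fun y => f y + g y) x.
Proof. intros H1 H2. exact (continuous_plus f g x H1 H2). Qed.
Lemma cminus (f g : R -> R) x : continuous f x -> continuous g x -> continuous (fun y => f y - g y) x.
Proof. intros H1 H2. exact (continuous_minus f g x H1 H2). Qed.
Lemma cmult (f g : R -> R) x : continuous f x -> continuous g x -> continuous (fun y => f y * g y) x.
Proof. intros H1 H2. exact (continuous_mult f g x H1 H2). Qed.
Lemma cconst (c : R) (x : R) : continuous (fun _ : R => c) x.
Proof. exact (continuous_const c x). Qed.
Lemma cid x : continuous (fun y : R => y) x.
Proof. exact (continuous_id x). Qed.

Lemma mvt0 (f df : R -> R) a b : 0 <= a < b ->
  (forall x, a <= x <= b -> continuous (fun y => f (Rmax 0 y)) x) ->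
  (forall x, a < x < b -> is_derive f x (df x)) ->
  exists c, a < c < b /\ f b - f a = df c * (b - a).
Proof.
  intros Hab Hc Hd.
  set (F := fun y => f (Rmax 0 y)).
  assert (HF : forall x, a < x < b -> is_derive F x (df x)).
  { intros x Hx.
    apply is_derive_ext_loc with (f := f). 2: apply Hd; lra.
    exists (mkposreal x ltac:(lra)). intros y Hy.
    unfold ball in *; simpl in *; unfold AbsRing_ball, abs, minus, plus, opp in *; simpl in *.
    apply Rabs_def2 in Hy. unfold F. rewrite Rmax_right by lra. reflexivity. }
  assert (pr1 : forall c, a < c < b -> derivable_pt F c).
  { intros c Hc'. exists (df c). apply is_derive_Reals. apply HF; auto. }
  destruct (MVT F id a b pr1 (fun c _ => derivable_pt_id c)) as [c [P Hm]].
  - lra.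
  - intros x Hx. apply continuity_pt_filterlim. apply Hc. lra.
  - intros x _. apply derivable_continuous_pt. apply derivable_pt_id.
  - exists c. split; auto.
    rewrite derive_pt_id in Hm.
    rewrite (derive_pt_eq_0 F c (df c) (pr1 c P)) in Hm.
    2: { apply is_derive_Reals. apply HF; auto. }
    unfold F, id in Hm. rewrite !Rmax_right in Hm by lra. lra.
Qed.

Lemma cont_id_nonneg : cont_on_nonneg (fun y => y).
Proof. intros x _ P [eps He]. exists eps. intros y Hy _. apply He. exact Hy. Qed.

Lemma cclamp x : 0 <= x -> continuous (fun y : R => Rmax 0 y) x.
Proof. intros Hx. exact (clamp_cont (fun y => y) x cont_id_nonneg Hx). Qed.

Lemma is_derive_eq (f : R -> R) (x l lp : R) : is_derive f x l -> l = lp -> is_derive f x lp.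
Proof. intros H <-. exact H. Qed.

Lemma copp (f : R -> R) x : continuous f x -> continuous (fun y => - f y) x.
Proof. intros H1. exact (continuous_opp f x H1). Qed.
Ltac cont_tac := repeat match goal with
 | |- continuous (fun y => Rmax 0 y) ?x => apply (cclamp x)
 | |- continuous (fun y => @?f y - @?g y) ?x => apply (cminus f g x)
 | |- continuous (fun y => @?f y + @?g y) ?x => apply (cplus f g x)
 | |- continuous (fun y => - @?f y) ?x => apply (copp f x)
 | |- continuous (fun y => @?f y * @?g y) ?x => apply (cmult f g x)
 | |- continuous (fun y => ?f (Rmax 0 y)) ?x => apply (clamp_cont f x)
 | |- continuous (fun _ => ?c) ?x => apply (cconst c x)
end.

Lemma dminus (f g : R -> R) x df dg : is_derive f x df -> is_derive g x dg -> is_derive (fun y => f y - g y) x (df - dg).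
Proof. intros H1 H2. exact (is_derive_minus f g x df dg H1 H2). Qed.
Lemma dplus (f g : R -> R) x df dg : is_derive f x df -> is_derive g x dg -> is_derive (fun y => f y + g y) x (df + dg).
Proof. intros H1 H2. exact (is_derive_plus f g x df dg H1 H2). Qed.
Lemma dconst (c : R) x : is_derive (fun _ : R => c) x 0.
Proof. exact (is_derive_const c x). Qed.
Lemma did x : is_derive (fun y : R => y) x 1.
Proof. exact (is_derive_id x). Qed.
Lemma dmult (f g : R -> R) x df dg : is_derive f x df -> is_derive g x dg -> is_derive (fun y => f y * g y) x (df * g x + f x * dg).
Proof. exact (Derive.is_derive_mult f g x df dg). Qed.

Theorem mainTheorem3 (D chi eps a beta : R) :
  0 < D -> 0 < chi -> 0 < eps -> 0 <= a -> 0 < beta ->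
  let b := D * beta ^ 2 in
  ~ exists (r0 : R) (rho phi phi1 phi2 : R -> R),
      0 < r0 /\
      cont_on_nonneg rho /\
      C2_nonneg phi phi1 phi2 /\
      (forall r, 0 <= r -> 0 <= rho r) /\
      0 <= phi 0 /\
      rho 0 = 0 /\
      (forall r, 0 < r < r0 -> 0 < rho r) /\
      (forall r, r0 <= r -> rho r = 0) /\
      (forall r, 0 < r < r0 ->
         ex_derive rho r /\ eps * rho r * Derive rho r = chi * rho r * phi1 r) /\
      (forall r, 0 < r ->
         D * phi2 r + D * phi1 r / r + a * rho r - b * phi r = 0).
Proof.
  intros HD Hchi Heps Ha Hbeta b [r0 [rho [phi [phi1 [phi2 [Hr0 [Crho [[[Dphi _] [[Dphi1 _] [Cphi [Cphi1 Cphi2]]]] [Hpos [Hphi0 [Hrho0 [Hrhopos [Hrhoz [Hder Hode]]]]]]]]]]]]]].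
  assert (Hb : 0 < b) by (unfold b; apply Rmult_lt_0_compat; [lra | apply pow_lt; lra]).
  set (k := chi / eps).
  assert (Hk : 0 < k) by (unfold k; apply Rdiv_lt_0_compat; lra).
  assert (Hd1 : forall r, 0 < r < r0 -> is_derive rho r (k * phi1 r)).
  { intros r Hr. destruct (Hder r Hr) as [Hex Heq].
    assert (Derive rho r = k * phi1 r).
    { apply Rmult_eq_reg_l with (eps * rho r).
      - rewrite Heq. unfold k. field. lra.
      - specialize (Hrhopos r Hr). nra. }
    rewrite <- H. apply Derive_correct. exact Hex. }
  set (p0 := phi 0).
  assert (Hrel : forall r, 0 <= r <= r0 -> rho r = k * (phi r - p0)).
  { intros r Hr. destruct (Req_dec r 0) as [->|Hr'].
    - rewrite Hrho0. unfold p0. ring.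
    - destruct (mvt0 (fun y => rho y - k * phi y) (fun _ => 0) 0 r) as [c [Hc Hm]].
      + lra.
      + intros x Hx. cont_tac; auto; lra.
      + intros x Hx. eapply is_derive_eq.
        * apply dminus. apply Hd1; lra. apply dmult. apply dconst. apply Dphi; lra.
        * cbv beta; ring.
      + simpl in Hm. rewrite Hrho0 in Hm. unfold p0. lra. }
  assert (Hpr0 : phi r0 = p0).
  { assert (H := Hrel r0 ltac:(lra)). rewrite Hrhoz in H by lra.
    assert (k * (phi r0 - p0) = 0) by lra.
    apply Rmult_integral in H0. destruct H0; lra. }
  assert (Hpin : forall r, 0 < r < r0 -> p0 < phi r).
  { intros r Hr. assert (H := Hrel r ltac:(lra)). assert (H2 := Hrhopos r Hr).
    rewrite H in H2. apply Rmult_lt_reg_l with k; lra. }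
  set (lam := a * k - b).
  assert (Hode' : forall r, 0 < r < r0 -> D * phi2 r + D * phi1 r / r + lam * (phi r - p0) - b * p0 = 0).
  { intros r Hr. assert (H := Hode r ltac:(lra)). rewrite (Hrel r) in H by lra.
    unfold lam. lra. }
  assert (Hr2 : 0 < r0 / 2 < r0) by lra.
  destruct (Rle_lt_dec lam 0) as [Hlam | Hlam].
  -
    assert (Hg : forall r, 0 < r < r0 -> 0 <= phi1 r).
    { intros r Hr.
      destruct (mvt0 (fun y => y * phi1 y) (fun y => 1 * phi1 y + y * phi2 y) 0 r) as [c [Hc Hm]].
      + lra.
      + intros x Hx. cont_tac; auto; lra.
      + intros x Hx. apply dmult. apply did. apply Dphi1; lra.
      + assert (Hc0 : 0 <= 1 * phi1 c + c * phi2 c).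
        { assert (H := Hode' c ltac:(lra)).
          assert (E : 1 * phi1 c + c * phi2 c = c / D * (D * phi2 c + D * phi1 c / c)) by (field; lra).
          rewrite E. apply Rmult_le_pos. apply Rlt_le, Rdiv_lt_0_compat; lra.
          assert (Hp := Hpin c ltac:(lra)). replace (D * phi2 c + D * phi1 c / c) with (b * p0 + (- lam) * (phi c - p0)) by lra. assert (0 <= b * p0) by (apply Rmult_le_pos; [apply Rlt_le; exact Hb | exact Hphi0]). assert (0 <= (- lam) * (phi c - p0)) by (apply Rmult_le_pos; lra). lra. }
        simpl in Hm. nra. }
    destruct (mvt0 phi phi1 (r0/2) r0) as [c [Hc Hm]].
    + lra.
    + intros x Hx. cont_tac; auto; lra.
    + intros x Hx. apply Dphi; lra.
    + assert (H1 := Hg c ltac:(lra)). assert (H2 := Hpin (r0/2) Hr2). nra.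
  -
    assert (Hle : filter_le (at_right 0) (locally 0)).
    { intros P HP. unfold at_right, within. apply filter_imp with (2 := HP). auto. }
    assert (Hphi10 : phi1 0 = 0).
    { set (Q := fun y => Rmax 0 y * (b / D * phi (Rmax 0 y) - a / D * rho (Rmax 0 y) - phi2 (Rmax 0 y))).
      assert (HQ : continuous Q 0) by (unfold Q; cont_tac; auto; lra).
      assert (HQ0 : Q 0 = 0) by (unfold Q; rewrite Rmax_left by lra; ring).
      assert (HP1 : continuous (fun y => phi1 (Rmax 0 y)) 0) by (apply clamp_cont; auto; lra).
      unfold continuous in HQ, HP1. rewrite HQ0 in HQ. rewrite Rmax_left in HP1 by lra.
      apply (filterlim_filter_le_1 _ Hle) in HQ. apply (filterlim_filter_le_1 _ Hle) in HP1.
      apply (filterlim_ext_loc Q (fun y => phi1 (Rmax 0 y))) in HQ.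
      - exact (filterlim_locally_unique _ _ _ HP1 HQ).
      - exists (mkposreal 1 Rlt_0_1). intros y _ Hy. unfold Q. rewrite Rmax_right by lra.
        assert (H := Hode y Hy).
        assert (E : phi1 y = y / D * (D * phi1 y / y)) by (field; lra).
        rewrite E. replace (D * phi1 y / y) with (b * phi y - a * rho y - D * phi2 y) by lra.
        field. lra. }
    set (F := fun y => (b * p0 - lam * (phi y - p0)) * (b * p0 - lam * (phi y - p0)) + lam * D * (phi1 y * phi1 y)).
    set (dF := fun y => 2 * (b * p0 - lam * (phi y - p0)) * (- (lam * phi1 y)) + lam * D * (2 * phi1 y * phi2 y)).
    assert (HFd : forall y, 0 < y < r0 -> is_derive F y (dF y)).
    { intros y Hy.
      assert (HA : is_derive (fun y => b * p0 - lam * (phi y - p0)) y (0 - (0 * (phi y - p0) + lam * (phi1 y - 0)))).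
      { apply (dminus (fun _ => b * p0) (fun t => lam * (phi t - p0))). apply dconst. apply (dmult (fun _ => lam) (fun t => phi t - p0)). apply dconst. apply (dminus phi (fun _ => p0)). apply Dphi; lra. apply dconst. }
      assert (HB : is_derive (fun y => lam * D * (phi1 y * phi1 y)) y (0 * (phi1 y * phi1 y) + lam * D * (phi2 y * phi1 y + phi1 y * phi2 y))).
      { apply (dmult (fun _ => lam * D) (fun t => phi1 t * phi1 t)). apply dconst. apply (dmult phi1 phi1); apply Dphi1; lra. }
      assert (HF := dplus _ _ y _ _ (dmult _ _ y _ _ HA HA) HB).
      eapply is_derive_eq. exact HF. cbv beta. unfold dF. ring. }
    assert (HFc : forall x, 0 <= x <= r0 -> continuous (fun y => F (Rmax 0 y)) x).
    { intros x Hx. unfold F. cont_tac; auto; lra. }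
    assert (HFform : forall y, 0 < y < r0 -> dF y = - (2 * lam * D * (phi1 y * phi1 y) / y)).
    { intros y Hy. assert (H := Hode' y Hy).
      assert (Hphi2 : D * phi2 y = (b * p0 - lam * (phi y - p0)) - D * phi1 y / y) by lra.
      assert (E : dF y = 2 * lam * phi1 y * (D * phi2 y - (b * p0 - lam * (phi y - p0)))) by (unfold dF; ring).
      rewrite E, Hphi2. field. lra. }
    assert (HFs : forall y, 0 < y < r0 -> dF y <= 0).
    { intros y Hy. rewrite HFform by auto.
      assert (0 <= phi1 y * phi1 y) by (pose proof (Rle_0_sqr (phi1 y)); unfold Rsqr in *; lra).
      assert (0 < 2 * lam * D) by (apply Rmult_lt_0_compat; lra).
      assert (0 <= 2 * lam * D * (phi1 y * phi1 y) / y).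
      { unfold Rdiv. apply Rmult_le_pos. apply Rmult_le_pos; lra. apply Rlt_le, Rinv_0_lt_compat; lra. }
      lra. }
    assert (HF0 : F 0 = (b * p0) * (b * p0)).
    { unfold F. rewrite Hphi10. unfold p0. ring. }
    assert (HFr0 : F 0 <= F r0).
    { rewrite HF0. unfold F. rewrite Hpr0.
      assert (0 <= phi1 r0 * phi1 r0) by (pose proof (Rle_0_sqr (phi1 r0)); unfold Rsqr in *; lra).
      assert (0 <= lam * D * (phi1 r0 * phi1 r0)) by (apply Rmult_le_pos; [apply Rmult_le_pos; lra | lra]).
      lra. }
    assert (Hconst : forall r, 0 < r < r0 -> F r = F 0).
    { intros r Hr.
      destruct (mvt0 F dF 0 r) as [c [Hc Hm]]; [lra | intros; apply HFc; lra | intros; apply HFd; lra |].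
      destruct (mvt0 F dF r r0) as [c' [Hc' Hm']]; [lra | intros; apply HFc; lra | intros; apply HFd; lra |].
      assert (H1 := HFs c ltac:(lra)). assert (H2 := HFs c' ltac:(lra)).
      assert (0 <= - dF c * (r - 0)) by (apply Rmult_le_pos; lra). assert (0 <= - dF c' * (r0 - r)) by (apply Rmult_le_pos; lra).
      lra. }
    assert (Hzero : forall r, 0 < r < r0 -> phi1 r = 0).
    { intros r Hr.
      assert (Hd0 : is_derive F r 0).
      { apply is_derive_ext_loc with (f := fun _ => F 0). 2: apply dconst.
        assert (Hm : 0 < Rmin r (r0 - r)) by (apply Rmin_glb_lt; lra).
        exists (mkposreal _ Hm). intros y Hy.
        unfold ball in Hy; simpl in Hy; unfold AbsRing_ball, abs, minus, plus, opp in Hy; simpl in Hy.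
        apply Rabs_def2 in Hy. assert (Rmin r (r0 - r) <= r) by apply Rmin_l. assert (Rmin r (r0 - r) <= r0 - r) by apply Rmin_r.
        symmetry. apply Hconst. lra. }
      assert (HdF0 : dF r = 0).
      { rewrite <- (is_derive_unique F r (dF r) (HFd r Hr)). exact (is_derive_unique F r 0 Hd0). }
      assert (Hsq : phi1 r * phi1 r = 0).
      { assert (Hne : 2 * lam * D / r <> 0).
        { apply Rgt_not_eq. unfold Rdiv. apply Rmult_gt_0_compat. apply Rmult_lt_0_compat; lra. apply Rinv_0_lt_compat; lra. }
        apply Rmult_eq_reg_l with (2 * lam * D / r); auto. rewrite Rmult_0_r.
        replace (2 * lam * D / r * (phi1 r * phi1 r)) with (- dF r) by (rewrite HFform by auto; field; lra).
        rewrite HdF0. ring. }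
      apply Rmult_integral in Hsq. destruct Hsq; auto. }
    destruct (mvt0 phi phi1 0 (r0 / 2)) as [c [Hc Hm]].
    + lra.
    + intros x Hx. cont_tac; auto; lra.
    + intros x Hx. apply Dphi; lra.
    + rewrite Hzero in Hm by lra. assert (H2 := Hpin (r0/2) Hr2). unfold p0 in H2. lra.
Qed.
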